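(* Let $\ell$ be a prime, $\nu\ge1$, and $R$ a $\mathbb{Z}/\ell^\nu$-algebra. Let $L'$ be the free $R$-module with basis $\alpha_0,\alpha_1,\dots,\alpha_{\ell-1}$ and $L\subseteq L'$ the submodule spanned by $\alpha_1,\dots,\alpha_{\ell-1}$. For $k\ge0$ define $b_k:L'\to L'$ by $b_k(\alpha_i)=(k\ell+i)\alpha_i+(k\ell+i+1)\alpha_{i+1}$ for $0\le i\le \ell-2$ and $b_k(\alpha_{\ell-1})=(k\ell+\ell-1)\alpha_{\ell-1}$ (so $b_k(L)\subseteq L$). Then for every $k\ge0$ the natural maps $L\to L[1/b_k]\to L'[1/b_k]$ are isomorphisms, where $M[1/b_k]$ denotes the colimit of $M\xrightarrow{b_k}M\xrightarrow{b_k}M\to\cdots$. *)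

(* Defs.v *)
From HB Require Import structures.
From mathcomp Require Import all_boot all_order all_algebra.
Set Implicit Arguments. Unset Strict Implicit. Unset Printing Implicit Defensive.
Import Order.TTheory GRing.Theory Num.Theory.
Local Open Scope ring_scope.

(* L' = free R-module with basis alpha_0..alpha_{l-1}, represented as
   coordinate vectors {ffun 'I_l -> R}; v i = coefficient of alpha_i. *)

Definition coord (R : pzRingType) (l : nat) (v : {ffun 'I_l -> R}) (n : nat) : R :=
  match insub n with Some i => v i | None => 0 end.

(* b_k(alpha_i) = (k l + i) alpha_i + (k l + i + 1) alpha_{i+1}  (i <= l-2),
   b_k(alpha_{l-1}) = (k l + l - 1) alpha_{l-1}.
   Hence the coefficient of alpha_j in b_k(v) is
   (k l + j) * (v_j + v_{j-1})  (with v_{-1} := 0). *)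
Definition bk (R : pzRingType) (l k : nat) (v : {ffun 'I_l -> R}) : {ffun 'I_l -> R} :=
  [ffun j : 'I_l => (k * l + j)%:R *
     (v j + (if (j : nat) is i.+1 then coord v i else 0))].

(* L = span of alpha_1..alpha_{l-1}: vectors with zero alpha_0-coefficient *)
Definition inL (R : pzRingType) (l : nat) (v : {ffun 'I_l -> R}) : Prop :=
  forall j : 'I_l, (j : nat) = 0%N -> v j = 0.

(* Colimit M[1/b] of M -b-> M -b-> ... (M a b-stable subset), realized as
   the set of pairs (m, n) ("m at stage n") with m in M, modulo the
   equivalence (m,n) ~ (m',n') iff b^(t+n') m = b^(t+n) m' for some t. *)
Definition colim_rel (V : Type) (b : V -> V) (x y : V * nat) : Prop :=
  exists t : nat, iter (t + y.2) b x.1 = iter (t + x.2) b y.1.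

(* The natural map M -> M[1/b], m |-> [(m,0)], is bijective. *)
Definition canon_map_bij (V : Type) (M : V -> Prop) (b : V -> V) : Prop :=
  (forall m m', M m -> M m' -> colim_rel b (m, 0%N) (m', 0%N) -> m = m') /\
  (forall m n, M m -> exists m', M m' /\ colim_rel b (m', 0%N) (m, n)).

(* The map M[1/b] -> N[1/b] induced by the inclusion M ⊆ N,
   [(m,n)] |-> [(m,n)], is bijective (the colimit relations of M and N
   are computed with the same b, in M resp. N). *)
Definition incl_map_bij (V : Type) (M N : V -> Prop) (b : V -> V) : Prop :=
  (forall m n m' n', M m -> M m' ->
      colim_rel b (m, n) (m', n') -> colim_rel b (m, n) (m', n')) /\
  (forall v n, N v -> exists m n', M m /\ colim_rel b (m, n') (v, n)).

(* Main.v *)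
Require Import Defs.
From HB Require Import structures.
From mathcomp Require Import all_boot all_order all_algebra.
Import GRing.Theory.
Local Open Scope ring_scope.

Section Aux.
Variables (l nu : nat) (R : pzRingType).
Hypotheses (hl : prime l) (hR : (l ^ nu)%:R = 0 :> R).
Variable k : nat.
Implicit Types v w : {ffun 'I_l -> R}.

Lemma coordE (v : {ffun 'I_l -> R}) (j : 'I_l) : Defs.coord v j = v j.
Proof. by rewrite /Defs.coord valK. Qed.

Lemma unit_nat (j : nat) : (0 < j)%N -> (j < l)%N ->
  exists c : nat, c%:R * (k * l + j)%:R = 1 :> R.
Proof.
move=> j0 jl.
have cop : coprime (k * l + j) (l ^ nu).
  rewrite coprime_sym; apply: coprimeXl; rewrite prime_coprime //.
  by rewrite dvdn_addr ?dvdn_mull // gtnNdvd.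
have pos : (0 < k * l + j)%N by rewrite addn_gt0 j0 orbT.
case: (egcdnP (l ^ nu) pos) => km kn def _.
exists km; rewrite -natrM def (eqP cop) natrD natrM hR mulr0 add0r.
done.
Qed.

Lemma bk_L v : inL v -> inL (bk k v).
Proof.
move=> hv j j0; rewrite /bk ffunE hv // j0 /= addr0 mulr0 //.
Qed.

Lemma iter_L n v : inL v -> inL (iter n (bk k) v).
Proof. by elim: n => //= n IH hv; apply: bk_L; apply: IH. Qed.

Lemma bk_inj v v' : inL v -> inL v' -> bk k v = bk k v' -> v = v'.
Proof.
move=> hv hv' e.
suff H : forall i, Defs.coord v i = Defs.coord v' i.
  by apply/ffunP => j; rewrite -!coordE H.
elim=> [|i IH].
  rewrite /Defs.coord; case: insubP => // j _ vj.
  by rewrite !(hv j, hv' j) // vj.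
rewrite /Defs.coord; case: insubP => // j ji vj.
have := congr1 (fun f : {ffun 'I_l -> R} => f j) e; rewrite /bk !ffunE vj /= IH.
have [c hc] := @unit_nat i.+1 (ltn0Sn _) ji.
move=> /(congr1 (fun x => c%:R * x)); rewrite !mulrA hc !mul1r.
by move/addIr.
Qed.

Lemma cfun : exists cf : nat -> nat, forall j, (0 < j)%N -> (j < l)%N ->
  (cf j)%:R * (k * l + j)%:R = 1 :> R.
Proof.
have H : forall j, exists c : nat, ((0 < j < l)%N ==> ((c%:R * (k * l + j)%:R : R) == 1)).
  move=> j; case: (boolP (0 < j < l)%N) => [/andP [h1 h2]|_]; last by exists 0%N.
  by have [c hc] := @unit_nat _ h1 h2; exists c; rewrite hc eqxx.
exists (fun j => xchoose (H j)) => j h1 h2.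
have := xchooseP (H j); move=> /implyP h; apply/eqP; apply: h; by rewrite h1 h2.
Qed.

Lemma bk_surj w : inL w -> exists v, inL v /\ bk k v = w.
Proof.
move=> hw; have [cf hcf] := cfun.
pose f := fix f (i : nat) : R := if i is i'.+1 then (cf i)%:R * Defs.coord w i - f i' else 0.
exists [ffun j : 'I_l => f j]; split.
  by move=> j j0; rewrite ffunE j0.
apply/ffunP => j; rewrite /bk !ffunE.
case E: (nat_of_ord j) => [|i].
  by rewrite addr0 /= (hw j E) mulr0.
have ci : Defs.coord [ffun j0 : 'I_l => f j0] i = f i.
  rewrite /Defs.coord; case: insubP => [i' _ Ei|]; first by rewrite ffunE Ei.
  by rewrite -E (leq_trans (leqnSn _) (ltn_ord j)).
rewrite ci /= subrK -E coordE mulrA.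
have : (0 < j)%N by rewrite E.
move=> /hcf - /(_ (ltn_ord j)).
by rewrite -natrM mulnC natrM => ->; rewrite mul1r.
Qed.

Lemma iter_surj n w : inL w -> exists v, inL v /\ iter n (bk k) v = w.
Proof.
elim: n w => [|n IH] w hw; first by exists w.
have [v1 [h1 e1]] := IH w hw.
have [v2 [h2 e2]] := @bk_surj _ h1.
by exists v2; split => //; rewrite iterSr e2.
Qed.

Lemma iter_inj n v v' : inL v -> inL v' -> iter n (bk k) v = iter n (bk k) v' -> v = v'.
Proof.
move=> hv hv'; elim: n => [|n IH] //= e; apply: IH.
exact: (bk_inj _ _ (iter_L n _ hv) (iter_L n _ hv') e).
Qed.

Lemma iter_coord0 n v (j : 'I_l) : (j : nat) = 0%N ->
  iter n (bk k) v j = ((k * l) ^ n)%:R * v j.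
Proof.
move=> j0; elim: n => [|n IH] /=; first by rewrite mul1r.
by rewrite /bk ffunE j0 addn0 addr0 IH mulrA -natrM expnS.
Qed.
End Aux.

Theorem lemma2p3 (l nu : nat) (R : pzRingType)
    (hl : prime l) (hnu : (1 <= nu)%N) (hR : (l ^ nu)%:R = 0 :> R) (k : nat) :
  canon_map_bij (@inL R l) (bk k) /\
  incl_map_bij (@inL R l) (fun _ => True) (bk k).
Proof.
split; first split.
- move=> m m' hm hm' [t /=]; rewrite !addn0.
  exact: (@iter_inj _ _ _ hl hR k t m m' hm hm').
- move=> m n hm.
  have [v [hv e]] := @iter_surj _ _ _ hl hR k n m hm.
  by exists v; split => //; exists 0%N; rewrite /= add0n e.
split; first by [].
move=> v n _; exists (iter nu (bk k) v), (n + nu)%N; split.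
  move=> j j0; rewrite iter_coord0 // expnMn natrM hR mulr0 mul0r //.
by exists 0%N; rewrite /= !add0n iterD.
Qed.
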